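(* For all morphisms $(\varphi,g,f),(\psi,g_1,f_1):(A,Z,p)\to(A_1,Z_1,p_1)$ in $\mathsf C(\mathcal A,\mathcal P,\mathcal X)$, one has $f=f_1$ if and only if $\varphi^{\vee}=\psi^{\vee}$, where $\varphi^{\vee}(a)=\bigvee\{\varphi(b)\mid b\in\mathbb B_p,\ b\ll_p a\}$ (and similarly for $\psi$).
   Context: $\mathsf C(\mathcal A,\mathcal P,\mathcal X)$: objects are triples $(A,Z,p)$ with $A$ a complete Boolean algebra, $Z$ an open dense subset of the Stone space $\mathrm{Ult}(A)$ (basic clopen sets $\varepsilon_A(a)=\{\mathfrak u\mid a\in\mathfrak u\}$), and $p:Z\to Y$ a perfect irreducible continuous surjection onto a locally compact Hausdorff space $Y$; a morphism $(\varphi,g,f):(A,Z,p)\to(A_1,Z_1,p_1)$ consists of a Boolean homomorphism $\varphi:A\to A_1$, the map $g:Z_1\to Z$, $g(\mathfrak u')=\varphi^{-1}(\mathfrak u')$, and a map $f:Y_1\to Y$ with $p\circ g=f\circ p_1$. On $A$ one has the contact relation $a\,C_p\,b$ iff $p(\varepsilon_A(a)\cap Z)\cap p(\varepsilon_A(b)\cap Z)\neq\emptyset$, with $a\ll_p b$ iff not $a\,C_p\,b^*$, and the ideal of bounded elements $\mathbb B_p=\{a\in A\mid\varepsilon_A(a)\subseteq Z\}$. *)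

(* Defs.v *)
From HB Require Import structures.
From mathcomp Require Import all_boot all_order.
From mathcomp Require Import boolp classical_sets topology.
Set Implicit Arguments. Unset Strict Implicit. Unset Printing Implicit Defensive.
Import Order.TTheory.
Local Open Scope classical_set_scope.

Section BooleanAlgebras.
Context {d : Order.disp_t} (A : ctbDistrLatticeType d).

Definition complete_BA : Prop := forall S : set A, supremums S !=set0.

(** Join of a subset (well defined when A is complete). *)
Definition bigjoin (S : set A) : A := supremum \bot%O S.

Definition BA_filter (u : set A) : Prop :=
  [/\ u \top%O,
      (forall a b, u a -> (a <= b)%O -> u b) &
      (forall a b, u a -> u b -> u (Order.meet a b))].

Definition ultrafilter (u : set A) : Prop :=
  [/\ BA_filter u, ~ u \bot%O &
      (forall v, BA_filter v -> ~ v \bot%O -> u `<=` v -> v = u)].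

Definition ult := {u : set A | ultrafilter u}.
HB.instance Definition _ := gen_eqMixin ult.
HB.instance Definition _ := gen_choiceMixin ult.

Definition eps (a : A) : set ult := [set u | sval u a].

Definition eps_base (i : option A) : set ult :=
  if i is Some a then eps a else setT.
HB.instance Definition _ :=
  @isSubBaseTopological.Build ult (option A) setT eps_base.

End BooleanAlgebras.

Definition bool_hom {d1 d2 : Order.disp_t} (A : ctbDistrLatticeType d1)
  (B : ctbDistrLatticeType d2) (phi : A -> B) : Prop :=
  [/\ forall a b, phi (Order.meet a b) = Order.meet (phi a) (phi b),
      forall a b, phi (Order.join a b) = Order.join (phi a) (phi b),
      forall a, phi (Order.compl a) = Order.compl (phi a),
      phi \bot%O = \bot%O & phi \top%O = \top%O].

(** p : Z -> Y perfect irreducible continuous surjection (Z open dense in Ult A),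
    Y locally compact Hausdorff. The relatively closed subsets of Z are the
    C `&` Z with C closed in Ult(A). *)
Definition C_object {d : Order.disp_t} (A : ctbDistrLatticeType d)
  (Z : set (ult A)) (Y : topologicalType) (p : ult A -> Y) : Prop :=
  [/\ complete_BA A,
      open Z /\ dense Z,
      hausdorff_space Y /\ locally_compact [set: Y],
      {within Z, continuous p} /\ p @` Z = setT &
      [/\ (* perfect: closed map with compact fibres *)
          (forall C : set (ult A), closed C -> closed (p @` (C `&` Z))),
          (forall y : Y, compact (Z `&` p @^-1` [set y])) &
          (* irreducible: no proper closed subset of Z maps onto Y *)
          (forall C : set (ult A), closed C -> p @` (C `&` Z) = setT ->
             Z `<=` C)]].

Definition C_morphism {d d1 : Order.disp_t}
  (A : ctbDistrLatticeType d) (Z : set (ult A)) (Y : topologicalType)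
  (p : ult A -> Y)
  (A1 : ctbDistrLatticeType d1) (Z1 : set (ult A1)) (Y1 : topologicalType)
  (p1 : ult A1 -> Y1)
  (phi : A -> A1) (g : ult A1 -> ult A) (f : Y1 -> Y) : Prop :=
  [/\ bool_hom phi,
      (forall u' : ult A1, sval (g u') = phi @^-1` (sval u')),
      (forall u' : ult A1, Z1 u' -> Z (g u')) &
      (forall u' : ult A1, Z1 u' -> p (g u') = f (p1 u'))].

Section Contact.
Context {d : Order.disp_t} (A : ctbDistrLatticeType d) (Z : set (ult A))
  (Y : topologicalType) (p : ult A -> Y).

Definition contact (a b : A) : Prop :=
  p @` (eps a `&` Z) `&` p @` (eps b `&` Z) !=set0.

Definition wbelow (a b : A) : Prop := ~ contact a (Order.compl b).

Definition bounded (a : A) : Prop := eps a `<=` Z.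

End Contact.

Definition vee {d d1 : Order.disp_t} (A : ctbDistrLatticeType d)
  (Z : set (ult A)) (Y : topologicalType) (p : ult A -> Y)
  (A1 : ctbDistrLatticeType d1) (phi : A -> A1) (a : A) : A1 :=
  bigjoin [set phi b | b in [set b | bounded Z b /\ wbelow Z p b a]].

(* Main.v *)
Require Import Defs.
From HB Require Import structures.
From mathcomp Require Import all_boot all_order.
From mathcomp Require Import boolp classical_sets topology.
From mathcomp Require finmap.
Set Implicit Arguments. Unset Strict Implicit. Unset Printing Implicit Defensive.
Import Order.Theory.
Local Open Scope classical_set_scope.

Section UF.
Context {d : Order.disp_t} (A : ctbDistrLatticeType d).
Implicit Types (u : ult A) (a b w x : A).

Lemma le_compl_of_meet0 w a : (w `&` a)%O = \bot%O -> (w <= ~` a)%O.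
Proof. by move=> H; rewrite complEdiff -meet_eq0E_diff ?lex1 // H. Qed.

Lemma uf_top u : sval u \top%O.
Proof. by case: (svalP u) => [[]]. Qed.
Lemma uf_up u a b : sval u a -> (a <= b)%O -> sval u b.
Proof. by case: (svalP u) => [[_ H _] _ _]; apply: H. Qed.
Lemma uf_meetI u a b : sval u a -> sval u b -> sval u (a `&` b)%O.
Proof. by case: (svalP u) => [[_ _ H] _ _]; apply: H. Qed.
Lemma uf_bot u : ~ sval u \bot%O.
Proof. by case: (svalP u). Qed.
Lemma uf_meetE u a b : sval u (a `&` b)%O <-> sval u a /\ sval u b.
Proof.
split; last by case; apply: uf_meetI.
by move=> H; split; apply: uf_up H _; rewrite ?leIl ?leIr.
Qed.
Lemma uf_notboth u a : sval u a -> sval u (~` a)%O -> False.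
Proof. by move=> H1 H2; apply: (@uf_bot u); rewrite -(meetxC a); apply: uf_meetI. Qed.

Lemma uf_compl u a : ~ sval u a -> sval u (~` a)%O.
Proof.
move=> Hna.
pose v := [set x | exists w, sval u w /\ (w `&` a <= x)%O].
have vF : BA_filter v.
  split.
  - by exists \top%O; split; [exact: uf_top| rewrite lex1].
  - by move=> x y [w [uw le]] xy; exists w; split => //; apply: le_trans xy.
  - move=> x y [w1 [u1 l1]] [w2 [u2 l2]]; exists (w1 `&` w2)%O; split.
      exact: uf_meetI.
    rewrite lexI; apply/andP; split.
      by apply: le_trans l1; rewrite leI2 // leIl.
    by apply: le_trans l2; rewrite leI2 // leIr.
have [vb|nvb] := pselect (v \bot%O).
  case: vb => w [uw le]; apply: uf_up uw _; apply: le_compl_of_meet0.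
  by apply/eqP; rewrite eq_le le0x andbT.
exfalso; apply: Hna.
have sub : sval u `<=` v by move=> x ux; exists x; split => //; rewrite leIl.
case: (svalP u) => _ _ /(_ v vF nvb sub) veq.
by rewrite -veq; exists \top%O; split; [exact: uf_top|rewrite meetC meetx1].
Qed.

Lemma eps_compl a : eps (~` a)%O = ~` eps a.
Proof.
apply/seteqP; split => u /=.
  by move=> H1 H2; apply: uf_notboth H2 H1.
by move=> H; apply: uf_compl.
Qed.

Lemma eps_meet a b : eps (a `&` b)%O = eps a `&` eps b.
Proof. by apply/seteqP; split => u /=; rewrite /eps /= uf_meetE. Qed.

Lemma eps_top : eps (\top%O : A) = setT.
Proof. by apply/seteqP; split => u //= _; apply: uf_top. Qed.

Lemma eps_open a : open (eps a).
Proof.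
rewrite /open /=.
exists [set eps a]. move=> _ ->. exact: (@finI_from1 _ _ setT (@eps_base _ A) (Some a)).
by rewrite bigcup_set1.
Qed.

Lemma eps_closed a : closed (eps a).
Proof. by rewrite -[a]complK eps_compl; apply: open_closedC; apply: eps_open. Qed.

Lemma bigcap_eps (s : seq (option A)) :
  exists b, \bigcap_(i in [set x | x \in s]) @eps_base _ A i = eps b.
Proof.
elim: s => [|i s [b IH]].
  exists \top%O; rewrite eps_top; apply/seteqP; split => // u _ i.
exists ((if i is Some a then a else \top) `&` b)%O.
rewrite eps_meet -IH; apply/seteqP; split => u /=.
  move=> H; split.
    have := H i (mem_head i s).
    by case: i {H} => [a|] //= _; apply: uf_top.
  move=> j js; apply: H; change (j \in i :: s); by rewrite in_cons js orbT.
move=> [H1 H2] j js0; have : j \in i :: s := js0.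
 rewrite in_cons => /orP [/eqP ->|js]; last exact: H2.
by clear js0; case: i H1 => [a|] //=.
Qed.

Lemma open_base (W : set (ult A)) u : open W -> W u ->
  exists b, eps b u /\ eps b `<=` W.
Proof.
rewrite /open /= => -[D2 HD2 E] Wu.
rewrite -E in Wu; case: Wu => F DF Fu.
have := HD2 _ DF; rewrite /= => -[D' _ FE].
have [b Eb] := bigcap_eps (finmap.enum_fset D').
exists b.
have FE' : F = eps b.
  rewrite -FE -Eb; apply/seteqP; split => v H j Hj; exact: H.
rewrite -FE'; split => // v Fv; rewrite -E; exists F => //.
Qed.

Lemma uf_exists (x : A) : x != \bot%O -> exists u : ult A, sval u x.
Proof.
move=> xn0.
pose P (S : set A) := (exists a, S a) -> [/\ BA_filter S, ~ S \bot%O & S x].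
have [M [PM Mmax]] : exists M, P M /\ forall B, M `<` B -> ~ P B.
  apply: Zorn_bigcup => F FP Ftot [a [X FX Xa]].
  have PX := FP _ FX; have [[Xt _ _] _ Xx] := PX (ex_intro _ a Xa).
  have filt : forall Y, F Y -> forall b, Y b -> [/\ BA_filter Y, ~ Y \bot%O & Y x].
    by move=> Y FY b Yb; apply: (FP _ FY); exists b.
  split; last by exists X.
  - split.
    + by exists X.
    + move=> b c [Y FY Yb] bc; exists Y => //.
      by have [[_ H _] _ _] := filt Y FY b Yb; apply: H Yb bc.
    + move=> b c [Y FY Yb] [Y' FY' Yc].
      have [YY'|Y'Y] := Ftot _ _ FY FY'.
        exists Y' => //; have [[_ _ H] _ _] := filt Y' FY' c Yc.
        by apply: H => //; apply: YY'.
      exists Y => //; have [[_ _ H] _ _] := filt Y FY b Yb.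
      by apply: H => //; apply: Y'Y.
  - move=> [Y FY Yb]; have [_ H _] := filt Y FY _ Yb; exact: H.
pose px := [set y : A | (x <= y)%O].
have Ppx : P px.
  move=> _; split; last exact: lexx.
  - split; first by rewrite /px /= lex1.
    + by move=> b c xb bc; apply: le_trans bc.
    + by move=> b c xb xc; rewrite /px /= lexI xb xc.
  - by rewrite /px /= lex0 => /eqP x0; move: xn0; rewrite x0 eqxx.
have Mne : exists a, M a.
  apply: contrapT => Mn; have Mp : M `<` px.
    split; first by move=> a Ma; exfalso; apply: Mn; exists a.
    by move=> /(_ x (lexx x)) Mx; apply: Mn; exists x.
  exact: (Mmax _ Mp Ppx).
have [MF Mb Mx] := PM Mne.
have uM : ultrafilter M.
  split => // v vF vb Mv; apply: contrapT => vM.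
  apply: (Mmax v); first by rewrite properEneq; split => //; apply/eqP => E; apply: vM.
  by move=> _; split => //; apply: Mv.
by exists (exist _ M uM).
Qed.

Lemma dense_uf (Z : set (ult A)) (x : A) : dense Z -> x != \bot%O ->
  exists u, Z u /\ sval u x.
Proof.
move=> dZ xn0; have [u ux] := uf_exists xn0.
have [v [vx Zv]] := dZ (eps x) (ex_intro _ u ux) (eps_open x).
by exists v.
Qed.

Lemma bigjoin_ub (S : set A) y : complete_BA A -> S y -> (y <= bigjoin S)%O.
Proof.
move=> cA Sy; rewrite /bigjoin /supremum; case: ifP => [/eqP S0|_].
  by move: Sy; rewrite S0.
have := xgetPex \bot%O (cA S); case => ub _; exact: ub.
Qed.

Lemma bigjoin_least (S : set A) y : complete_BA A ->
  (forall z, S z -> (z <= y)%O) -> (bigjoin S <= y)%O.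
Proof.
move=> cA H; rewrite /bigjoin /supremum; case: ifP => [_|_]; first exact: le0x.
have := xgetPex \bot%O (cA S); case => _ lb; exact: lb.
Qed.

Lemma not_le_meet (a b : A) : ~~ (a <= b)%O -> (a `&` ~` b)%O != \bot%O.
Proof.
apply: contraNN => /eqP H; rewrite -[b]complK; exact: le_compl_of_meet0.
Qed.

End UF.
Lemma hom_mono {d d1 : Order.disp_t} (A : ctbDistrLatticeType d)
  (A1 : ctbDistrLatticeType d1) (phi : A -> A1) a b :
  bool_hom phi -> (a <= b)%O -> (phi a <= phi b)%O.
Proof. by case=> hm _ _ _ _ ab; rewrite -(meet_l ab) hm leIr. Qed.

Lemma wbelow_le {d : Order.disp_t} (A : ctbDistrLatticeType d) (Z : set (ult A))
  (Y : topologicalType) (p : ult A -> Y) (c a : A) :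
  dense Z -> wbelow Z p c a -> (c <= a)%O.
Proof.
move=> dZ cwa; case: (boolP (c <= a)%O) => // nle; exfalso.
have [u [Zu]] := dense_uf dZ (not_le_meet nle).
move=> /uf_meetE [uc una]; apply: cwa.
by exists (p u); split; exists u.
Qed.

Lemma open_pre {d : Order.disp_t} (A : ctbDistrLatticeType d) (Z : set (ult A))
  (Y : topologicalType) (p : ult A -> Y) (X : set Y) :
  open Z -> {within Z, continuous p} -> open X -> open (Z `&` p @^-1` X).
Proof.
move=> oZ cp oX; rewrite (continuous_open_subspace _ oZ) in cp.
exact: (proj1 (continuous_inP p oZ) cp X oX).
Qed.

Section Main.
Context {d d1 : Order.disp_t}
  (A : ctbDistrLatticeType d) (Z : set (ult A)) (Y : topologicalType)
  (p : ult A -> Y)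
  (A1 : ctbDistrLatticeType d1) (Z1 : set (ult A1)) (Y1 : topologicalType)
  (p1 : ult A1 -> Y1)
  (hobj : C_object Z p) (hobj1 : C_object Z1 p1)
  (phi : A -> A1) (g : ult A1 -> ult A) (f : Y1 -> Y)
  (psi : A -> A1) (g1 : ult A1 -> ult A) (f1 : Y1 -> Y)
  (hmor : C_morphism Z p Z1 p1 phi g f)
  (hmor1 : C_morphism Z p Z1 p1 psi g1 f1).

Lemma vee_le : (forall u', Z1 u' -> p (g u') = p (g1 u')) ->
  forall a, (vee Z p phi a <= vee Z p psi a)%O.
Proof.
move=> same a.
have [_ [oZ dZ] _ [cp _] [pcl _ _]] := hobj.
have [cA1 [_ dZ1] _ _ _] := hobj1.
have [_ gE gZ _] := hmor; have [_ g1E g1Z _] := hmor1.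
apply: bigjoin_least => // _ [b [bB bwa] <-].
case: (boolP (phi b <= vee Z p psi a)%O) => // nle; exfalso.
have [u' [Z1u' /uf_meetE [hb hnv]]] := dense_uf dZ1 (not_le_meet nle).
have gb : sval (g u') b by rewrite gE.
pose F := p @` (eps (~` a)%O `&` Z).
have cF : closed F by apply: pcl; apply: eps_closed.
have ynF : ~ F (p (g1 u')).
  rewrite -same // => Fy; apply: bwa; exists (p (g u')); split => //.
  by exists (g u') => //; split => //; apply: gZ.
have oW := open_pre oZ cp (closed_openC cF).
have [c [cu cW]] := open_base oW (conj (g1Z _ Z1u') ynF).
have cB : bounded Z c by move=> v /cW [].
have cwa : wbelow Z p c a.
  move=> [y [[v [vc Zv] <-] Fy]].
  by have [_ /= nF] := cW v vc; apply: nF.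
have le : (psi c <= vee Z p psi a)%O.
  by apply: bigjoin_ub => //; exists c.
have hc : sval u' (psi c) by move: cu; rewrite /eps /= g1E.
by apply: (uf_notboth (uf_up hc le)).
Qed.

Lemma same_p : (forall a, vee Z p phi a = vee Z p psi a) ->
  forall u', Z1 u' -> p (g u') = p (g1 u').
Proof.
move=> veq u' Z1u'.
have [_ [oZ dZ] [hY _] [cp _] _] := hobj.
have [cA1 [_ dZ1] _ _ _] := hobj1.
have [[_ _ psiC _ _] gE gZ _] := hmor; have [hpsi g1E g1Z _] := hmor1.
have [psim _ psic _ _] := hpsi.
apply: contrapT => /eqP neq.
move: hY; rewrite open_hausdorff => /(_ _ _ neq) [[U V] /= [xU yV] [oU oV /eqP UV0]].
have [b [bu bW]] := open_base (open_pre oZ cp oU) (conj (gZ _ Z1u') (set_mem xU)).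
have [c [cu cW]] := open_base (open_pre oZ cp oV) (conj (g1Z _ Z1u') (set_mem yV)).
have bB : bounded Z b by move=> v /bW [].
have bwa : wbelow Z p b (~` c)%O.
  rewrite /wbelow complK => -[y [[v [vb Zv] <-] [w [wc Zw] pw]]].
  have [_ /= pU] := bW v vb; have [_ /= pV] := cW w wc.
  have : (U `&` V) (p v) by split => //; rewrite -pw.
  by rewrite UV0.
have le1 : (phi b <= vee Z p phi (~` c)%O)%O by apply: bigjoin_ub => //; exists b.
have le2 : (vee Z p psi (~` c)%O <= psi (~` c)%O)%O.
  apply: bigjoin_least => // _ [c' [_ c'w] <-].
  by apply: hom_mono => //; apply: wbelow_le c'w.
have hb : sval u' (phi b) by move: bu; rewrite /eps /= gE.
have hc : sval u' (psi c) by move: cu; rewrite /eps /= g1E.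
rewrite veq in le1; have := uf_up hb (le_trans le1 le2).
by rewrite psic; apply: uf_notboth.
Qed.

End Main.

Unset Implicit Arguments.
Set Strict Implicit.

Theorem lemma3p16 {d d1 : Order.disp_t}
  (A : ctbDistrLatticeType d) (Z : set (ult A)) (Y : topologicalType)
  (p : ult A -> Y)
  (A1 : ctbDistrLatticeType d1) (Z1 : set (ult A1)) (Y1 : topologicalType)
  (p1 : ult A1 -> Y1)
  (hobj : C_object Z p) (hobj1 : C_object Z1 p1)
  (phi : A -> A1) (g : ult A1 -> ult A) (f : Y1 -> Y)
  (psi : A -> A1) (g1 : ult A1 -> ult A) (f1 : Y1 -> Y)
  (hmor : C_morphism Z p Z1 p1 phi g f)
  (hmor1 : C_morphism Z p Z1 p1 psi g1 f1) :
  f = f1 <-> vee Z p phi = vee Z p psi.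
Proof.
have [_ gE gZ gp] := hmor; have [_ g1E g1Z g1p] := hmor1.
split.
  move=> ff1.
  have same : forall u', Z1 u' -> p (g u') = p (g1 u').
    by move=> u' Zu'; rewrite gp // g1p // ff1.
  have same' : forall u', Z1 u' -> p (g1 u') = p (g u').
    by move=> u' Zu'; rewrite same.
  apply: funext => a; apply/eqP; rewrite eq_le.
  rewrite (vee_le hobj hobj1 hmor hmor1 same) /=.
  by rewrite (vee_le hobj hobj1 hmor1 hmor same').
move=> veq; apply: funext => y.
have [_ _ _ [_ surj] _] := hobj1.
have : (p1 @` Z1) y by rewrite surj.
case=> u' Zu' <-.
rewrite -gp // -g1p //.
apply: (same_p hobj hobj1 hmor hmor1) => // a.
by rewrite veq.
Qed.
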